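(* Let $C$ be a coalgebra over a field and $A=C^*$. Let $I_1\subseteq I_2\subseteq\cdots$ be an ascending chain of ideals of $A$, each closed in the finite topology. Then $\bigcup_n I_n$ is closed in the finite topology if and only if the chain terminates, i.e. $I_n=I_{n+1}=\cdots$ for some $n$.
   Context: $C^*$ is the dual algebra of the coalgebra $C$ with convolution product. For a subspace $X\subseteq C$ let $X^\perp=\{f\in C^*\mid f(X)=0\}$, and for $Y\subseteq C^*$ let $Y^\perp=\{c\in C\mid f(c)=0\ \forall f\in Y\}$. A subspace $W\subseteq C^*$ is closed in the finite topology iff $W=W^{\perp\perp}$, equivalently $W=X^\perp$ for some subspace $X\subseteq C$. *)

(* Defs.v *)
From mathcomp Require Import all_boot all_order all_algebra.
Set Implicit Arguments. Unset Strict Implicit. Unset Printing Implicit Defensive.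
Import GRing.Theory.
Local Open Scope ring_scope.

(* Since MathComp has no tensor product of
   (possibly infinite-dimensional) vector spaces, an element of C (x) C is
   represented by a finite list of pairs [(a_i, b_i)] standing for
   sum_i a_i (x) b_i.  Over a field, tensors (in C(x)C, C(x)C(x)C) are
   determined by their values on pure tensors of linear functionals
   f (x) g (resp. f (x) g (x) h), so the coalgebra axioms are stated
   through such evaluations; this is exactly the usual notion. *)

Section Coalg.
Variables (K : fieldType) (C : lmodType K).

Definition lin_functional (f : C -> K) : Prop :=
  forall (a : K) (x y : C), f (a *: x + y) = a * f x + f y.

Definition tens_eval (f g : C -> K) (s : seq (C * C)) : K :=
  \sum_(p <- s) f p.1 * g p.2.

Definition is_coalgebra (delta : C -> seq (C * C)) (eps : C -> K) : Prop :=
  [/\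
      lin_functional eps,
      (forall f g, lin_functional f -> lin_functional g ->
         lin_functional (fun c => tens_eval f g (delta c))),
      (* coassociativity: (id (x) Delta) Delta = (Delta (x) id) Delta *)
      (forall f g h c, lin_functional f -> lin_functional g -> lin_functional h ->
         \sum_(p <- delta c) f p.1 * tens_eval g h (delta p.2)
         = \sum_(p <- delta c) tens_eval f g (delta p.1) * h p.2),
      (forall c, \sum_(p <- delta c) eps p.1 *: p.2 = c)
    & (forall c, \sum_(p <- delta c) eps p.2 *: p.1 = c)].

Definition conv (delta : C -> seq (C * C)) (f g : C -> K) : C -> K :=
  fun c => tens_eval f g (delta c).

Definition is_ideal (delta : C -> seq (C * C)) (I : (C -> K) -> Prop) : Prop :=
  [/\ (forall f, I f -> lin_functional f),
      I (fun _ => 0),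
      (forall f g, I f -> I g -> I (fun c => f c + g c)),
      (forall (a : K) f, I f -> I (fun c => a * f c))
    & (forall f g, lin_functional g -> I f ->
         I (conv delta g f) /\ I (conv delta f g))].

Definition perpC (X : C -> Prop) : (C -> K) -> Prop :=
  fun f => lin_functional f /\ forall c, X c -> f c = 0.
Definition perpA (Y : (C -> K) -> Prop) : C -> Prop :=
  fun c => forall f, Y f -> f c = 0.

(* closed in the finite topology: W = W^perp^perp *)
Definition closed_finite (W : (C -> K) -> Prop) : Prop :=
  forall f, W f <-> perpC (perpA W) f.

End Coalg.

(* Main.v *)
Require Import Defs.
From mathcomp Require Import all_boot all_order all_algebra.
From mathcomp Require Import boolp classical_sets.
From Stdlib Require Import ClassicalEpsilon.
Set Implicit Arguments. Unset Strict Implicit. Unset Printing Implicit Defensive.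
Import GRing.Theory.
Local Open Scope ring_scope.
From mathcomp Require Import ring.

Definition subsp (K : fieldType) (C : lmodType K) (S : C -> Prop) :=
  S 0 /\ forall (a : K) x y, S x -> S y -> S (a *: x + y).
Definition linon (K : fieldType) (C : lmodType K) (S : C -> Prop) (h : C -> K) :=
  forall (a : K) x y, S x -> S y -> h (a *: x + y) = a * h x + h y.

Lemma subspD (K : fieldType) (C : lmodType K) (S : C -> Prop) x y :
  subsp S -> S x -> S y -> S (x + y).
Proof. by move=> [_ H] Sx Sy; have := H 1 x y Sx Sy; rewrite scale1r. Qed.
Lemma subspZ (K : fieldType) (C : lmodType K) (S : C -> Prop) a x :
  subsp S -> S x -> S (a *: x).
Proof. by move=> [S0 H] Sx; have := H a x 0 Sx S0; rewrite addr0. Qed.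
Lemma subspN (K : fieldType) (C : lmodType K) (S : C -> Prop) x :
  subsp S -> S x -> S (- x).
Proof. by move=> HS Sx; have := subspZ (-1) HS Sx; rewrite scaleN1r. Qed.
Lemma subspB (K : fieldType) (C : lmodType K) (S : C -> Prop) x y :
  subsp S -> S x -> S y -> S (x - y).
Proof. by move=> HS Sx Sy; apply: subspD => //; apply: subspN. Qed.

Lemma linon0 (K : fieldType) (C : lmodType K) (S : C -> Prop) h :
  subsp S -> linon S h -> h 0 = 0.
Proof.
move=> [S0 _] Hh; have := Hh 1 0 0 S0 S0; rewrite scale1r addr0 mul1r.
by move=> E; apply: (@addrI _ (h 0)); rewrite addr0 -E.
Qed.
Lemma linonD (K : fieldType) (C : lmodType K) (S : C -> Prop) h x y :
  linon S h -> S x -> S y -> h (x + y) = h x + h y.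
Proof. by move=> Hh Sx Sy; have := Hh 1 x y Sx Sy; rewrite scale1r mul1r. Qed.
Lemma linonZ (K : fieldType) (C : lmodType K) (S : C -> Prop) h a x :
  subsp S -> linon S h -> S x -> h (a *: x) = a * h x.
Proof.
move=> HS Hh Sx; have := Hh a x 0 Sx HS.1; rewrite addr0 (linon0 HS Hh) addr0 //.
Qed.

Lemma ext_lemma (K : fieldType) (C : lmodType K) (S : C -> Prop) (g : C -> K) :
  subsp S -> linon S g ->
  exists f, lin_functional f /\ forall c, S c -> f c = g c.
Proof.
move=> HS Hg.
pose good := fun (p : (C -> Prop) * (C -> K)) =>
  [/\ subsp p.1, (forall c, S c -> p.1 c), linon p.1 p.2 & forall c, S c -> p.2 c = g c].
pose T := {p | good p}.
pose R := fun (s t : T) => `[< forall c, (sval s).1 c -> (sval t).1 c /\ (sval s).2 c = (sval t).2 c >].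
have g0 : good (S, g) by split.
pose t0 : T := exist _ (S, g) g0.
have [t tmax] : exists t, premaximal (fun x y => R x y) t.
  apply: (@ZL_preorder T t0 R).
- by move=> s; apply/asboolP.
- move=> r s u /asboolP H1 /asboolP H2; apply/asboolP => c /H1 [/H2 [? <-] ->]; by [].
- move=> A Atot.
  case: (classic (exists s, A s)) => [[s0 As0]|nA]; last first.
    by exists t0 => s As; exfalso; apply: nA; exists s.
  pose D := fun c => exists s, A s /\ (sval s).1 c.
  pose h := fun c => (sval (epsilon (inhabits t0) (fun s => A s /\ (sval s).1 c))).2 c.
  have hE : forall s c, A s -> (sval s).1 c -> h c = (sval s).2 c.
    move=> s c As sc.
    have [As' sc'] : A (epsilon (inhabits t0) (fun s => A s /\ (sval s).1 c)) /\
       (sval (epsilon (inhabits t0) (fun s => A s /\ (sval s).1 c))).1 c.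
      exact: (@epsilon_spec T (inhabits t0) (fun s => A s /\ (sval s).1 c) (ex_intro _ s (conj As sc))).
    rewrite /h; move: As' sc'.
    set s' := epsilon _ _ => As' sc'.
    case: (Atot _ _ As As') => /asboolP H.
      by have [_ ->] := H c sc.
    by have [_ ->] := H c sc'.
  have common : forall s1 s2, A s1 -> A s2 -> exists s, [/\ A s, 
      (forall c, (sval s1).1 c -> (sval s).1 c) & (forall c, (sval s2).1 c -> (sval s).1 c)].
    move=> s1 s2 A1 A2; case: (Atot _ _ A1 A2) => /asboolP H.
      by exists s2; split => // c /H [].
    by exists s1; split => // c /H [].
  have gD : good (D, h).
    split => /=.
    - split; first by exists s0; split => //; case: (svalP s0) => [[]].
      move=> a x y [s1 [A1 x1]] [s2 [A2 y2]].
      have [s [As H1 H2]] := common _ _ A1 A2.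
      exists s; split => //; case: (svalP s) => [[_ Hs]] _ _ _.
      by apply: Hs; [apply: H1|apply: H2].
    - by move=> c Sc; exists s0; split => //; case: (svalP s0) => _ H _ _; apply: H.
    - move=> a x y [s1 [A1 x1]] [s2 [A2 y2]].
      have [s [As H1 H2]] := common _ _ A1 A2.
      case: (svalP s) => [[_ Hs]] _ Hl _.
      have x' := H1 _ x1; have y' := H2 _ y2.
      rewrite (hE s) //; last by apply: Hs.
      by rewrite (hE s x) ?(hE s y) //; apply: Hl.
    - move=> c Sc; case: (svalP s0) => _ H1 _ H2.
      by rewrite (hE s0) //; [apply: H2| apply: H1].
  exists (exist _ (D, h) gD) => s As; apply/asboolP => c sc /=.
  split; first by exists s.
  by rewrite (hE s).
case: (svalP t) => Dsub Ssub Hlin Hg'.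
have full : forall c, (sval t).1 c.
  move=> c; apply: NNPP => nc.
  set D := (sval t).1 in Dsub Ssub Hlin Hg' nc *.
  set h := (sval t).2 in Hlin Hg' *.
  have uniq : forall d1 d2 (a1 a2 : K), D d1 -> D d2 -> d1 + a1 *: c = d2 + a2 *: c ->
      d1 = d2 /\ a1 = a2.
    move=> d1 d2 a1 a2 D1 D2 E.
    have Ea : a1 = a2.
      apply: NNPP => ne; apply: nc.
      have -> : c = (a1 - a2)^-1 *: (d2 - d1).
        apply: (@scalerI _ _ (a1 - a2)); first by rewrite subr_eq0; apply/eqP.
        rewrite scalerA divff ?scale1r ?subr_eq0; last by apply/eqP.
        by rewrite scalerBl -[a1 *: c](addKr d1) E addrA addrK addrC.
      by apply: subspZ => //; apply: subspB.
    by split => //; move: E; rewrite Ea => /addIr.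
  pose D' := fun z => exists d (a : K), D d /\ z = d + a *: c.
  pose h' := fun z => h (epsilon (inhabits (0 : C, 0 : K)) (fun p => D p.1 /\ z = p.1 + p.2 *: c)).1.
  have h'E : forall d a, D d -> h' (d + a *: c) = h d.
    move=> d a Dd; rewrite /h'.
    set p := epsilon _ _.
    have [Dp Ep] : D p.1 /\ d + a *: c = p.1 + p.2 *: c.
      by apply: (@epsilon_spec (C * K)%type (inhabits (0 : C, 0 : K)) (fun p => D p.1 /\ d + a *: c = p.1 + p.2 *: c)); exists (d, a).
    by have [-> _] := uniq _ _ _ _ Dd Dp Ep.
  have gD' : good (D', h').
    split => /=.
    - split; first by exists 0, 0; split; [case: Dsub|rewrite scale0r addr0].
      move=> a x y [d1 [a1 [D1 ->]]] [d2 [a2 [D2 ->]]].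
      exists (a *: d1 + d2), (a * a1 + a2); split; first by case: Dsub => _; apply.
      by rewrite scalerDr scalerDl scalerA addrACA.
    - by move=> z Sz; exists z, 0; split; [apply: Ssub|rewrite scale0r addr0].
    - move=> a x y [d1 [a1 [D1 ->]]] [d2 [a2 [D2 ->]]].
      have -> : a *: (d1 + a1 *: c) + (d2 + a2 *: c) = (a *: d1 + d2) + (a * a1 + a2) *: c.
        by rewrite scalerDr scalerDl scalerA addrACA.
      rewrite !h'E //; last by case: Dsub => _; apply.
      by apply: Hlin.
    - move=> z Sz; have := h'E z 0 (Ssub _ Sz); rewrite scale0r addr0 => ->.
      by apply: Hg'.
  have Rtt : R t (exist _ (D', h') gD').
    apply/asboolP => z Dz /=; split; first by exists z, 0; split => //; rewrite scale0r addr0.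
    by have := h'E z 0 Dz; rewrite scale0r addr0 => ->.
  have /asboolP := tmax _ Rtt => /(_ c) /=.
  case; first by exists 0, 1; split; [case: Dsub|rewrite scale1r add0r].
  by [].
exists (sval t).2; split; last by [].
by move=> a x y; apply: Hlin.
Qed.

Lemma perpA_subsp (K : fieldType) (C : lmodType K) (Y : (C -> K) -> Prop) :
  (forall f, Y f -> lin_functional f) -> subsp (perpA Y).
Proof.
move=> HY; have l0 : forall f, Y f -> f 0 = 0.
  move=> f Yf; apply: (@linon0 K C (fun _ => True)) => //.
  by move=> a x y _ _; apply: HY.
split; first by move=> f Yf; apply: l0.
by move=> a x y Hx Hy f Yf; rewrite (HY f Yf) (Hx f Yf) (Hy f Yf) mulr0 addr0.
Qed.

Lemma main_aux (K : fieldType) (C : lmodType K)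
    (delta : C -> seq (C * C)) (eps : C -> K)
    (HC : is_coalgebra delta eps)
    (I : nat -> ((C -> K) -> Prop))
    (Hideal : forall n, is_ideal delta (I n))
    (Hclosed : forall n, closed_finite (I n))
    (Hchain : forall n f, I n f -> I n.+1 f) :
  closed_finite (fun f => exists n, I n f) <->
  exists n, forall m, (n <= m)%N -> forall f, I m f <-> I n f.
Proof.
have lin : forall n f, I n f -> lin_functional f by move=> n f; case: (Hideal n) => H *; apply: H.
have mono : forall n m f, (n <= m)%N -> I n f -> I m f.
  move=> n m f; elim: m => [|m IH]; first by rewrite leqn0 => /eqP ->.
  rewrite leq_eqVlt => /orP [/eqP -> //|]; rewrite ltnS => /IH H /H; apply: Hchain.
pose U := fun f => exists n, I n f.
pose X := fun n => perpA (I n).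
pose Xi := perpA U.
have Xdec : forall n m c, (n <= m)%N -> X m c -> X n c.
  by move=> n m c nm Hc f Hf; apply: Hc; apply: mono Hf.
have XS : forall n, subsp (X n) by move=> n; apply: perpA_subsp; apply: lin.
have XiS : subsp Xi by apply: perpA_subsp => f [n]; apply: lin.
have XiX : forall n c, Xi c -> X n c by move=> n c Hc f Hf; apply: Hc; exists n.
split; last first.
  move=> [n Hn] f.
  have UE : forall g, U g <-> I n g.
    move=> g; split; last by exists n.
    move=> [m Hm]; case: (leqP n m) => [nm|mn]; first by apply/(Hn m nm).
    by apply: mono Hm; apply: ltnW.
  have PE : forall c, perpA U c <-> perpA (I n) c.
    by move=> c; split => H g Hg; apply: H; apply/UE.
  split.
    move=> Hf; have /(Hclosed n f) [Hl H] : I n f by apply/UE.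
    by split => // c Hc; apply: H; apply/PE.
  by move=> [Hl H]; apply/UE; apply/(Hclosed n f); split => // c Hc; apply: H; apply/PE.
move=> Hcl; apply: NNPP => nt.
have ex : forall n, exists y, X n y /\ ~ Xi y.
  move=> n; apply: NNPP => H; apply: nt; exists n => m nm f; split; last by apply: mono.
  move=> Hm; apply/(Hclosed n f); split; first by apply: (lin m).
  move=> c Hc; have Xc : Xi c.
    by apply: NNPP => nc; apply: H; exists c.
  by apply: (XiX m c Xc).
have ex2 : forall n, exists p : C * nat, [/\ X n p.1, ~ Xi p.1, (n < p.2)%N & ~ X p.2 p.1].
  move=> n; have [y [Xy nXi]] := ex n.
  have [m nXm] : exists m, ~ X m y.
    apply: NNPP => H; apply: nXi => f [m Hm]; apply: NNPP => ne; apply: H; exists m => Xm.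
    by apply: ne; apply: Xm.
  exists (y, m); split => //=; case: (leqP m n) => // mn; exfalso.
  by apply: nXm; apply: Xdec Xy.
pose F := fun n => proj1_sig (constructive_indefinite_description _ (ex2 n)).
have FP : forall n, [/\ X n (F n).1, ~ Xi (F n).1, (n < (F n).2)%N & ~ X (F n).2 (F n).1].
  by move=> n; exact: (proj2_sig (constructive_indefinite_description _ (ex2 n))).
pose nk := fun k => iter k (fun n => (F n).2) 0%N.
pose y := fun k => (F (nk k)).1.
have Xy : forall k, X (nk k) (y k) by move=> k; case: (FP (nk k)).
have nXiy : forall k, ~ Xi (y k) by move=> k; case: (FP (nk k)).
have nXy : forall k, ~ X (nk k.+1) (y k) by move=> k; case: (FP (nk k)).
have nkge : forall k, (k <= nk k)%N.
  elim => [//|k IH]; rewrite /nk iterS -/(nk k).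
  by case: (FP (nk k)) => _ _ H _; apply: leq_ltn_trans H.

pose D := fix D (k : nat) : C -> Prop :=
  match k with 0%N => Xi | k'.+1 => fun c => exists a : K, D k' (c - a *: y k') end.
pose coef := fun k c => epsilon (inhabits (0 : K)) (fun a => D k (c - a *: y k)).
pose g := fix g (k : nat) : C -> K :=
  match k with 0%N => fun _ => 0 | k'.+1 => fun c => g k' (c - coef k' c *: y k') + coef k' c end.
have DS : forall k, subsp (D k).
  elim => [//|k [D0 DL]]; split; first by exists 0; rewrite scale0r subr0.
  move=> a u v [au Hu] [av Hv]; exists (a * au + av).
  have -> : a *: u + v - (a * au + av) *: y k = a *: (u - au *: y k) + (v - av *: y k).
    by rewrite scalerBr scalerA addrACA -opprD scalerDl.
  by apply: DL.
have XiD : forall k c, Xi c -> D k c.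
  elim => [//|k IH] c Hc; exists 0; rewrite scale0r subr0; exact: IH.
have inv : forall k c, D k c -> X (nk k) c -> Xi c.
  elim => [//|k IH] c [a Ha] Xc.
  have Xc' : X (nk k) c by apply: Xdec Xc; apply: ltnW; case: (FP (nk k)).
  have Xca : X (nk k) (c - a *: y k) by exact: (subspB (XS _) Xc' (subspZ a (XS _) (Xy k))).
  have Xi1 := IH _ Ha Xca.
  have aye : X (nk k.+1) (a *: y k).
    have -> : a *: y k = c - (c - a *: y k) by rewrite opprB addrC subrK.
    by apply: (subspB (XS _)) => //; apply: XiX.
  case: (eqVneq a 0) => [a0|an0]; first by move: Xi1; rewrite a0 scale0r subr0.
  exfalso; apply: (nXy k).
  have -> : y k = a^-1 *: (a *: y k) by rewrite scalerA mulVf ?scale1r.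
  by apply: (subspZ _ (XS _)).
have uniqc : forall k c a b, D k (c - a *: y k) -> D k (c - b *: y k) -> a = b.
  move=> k c a b Ha Hb; apply: NNPP => ne.
  have Hd : D k ((a - b) *: y k).
    have -> : (a - b) *: y k = (c - b *: y k) - (c - a *: y k).
      by rewrite scalerBl opprB [RHS]addrC addrA subrK.
    by apply: (subspB (DS k)).
  have Dy : D k (y k).
    have -> : y k = (a - b)^-1 *: ((a - b) *: y k).
      by rewrite scalerA mulVf ?scale1r // subr_eq0; apply/eqP.
    by apply: (subspZ _ (DS k)).
  by apply: (nXiy k); apply: inv Dy (Xy k).
have coefE : forall k c a, D k (c - a *: y k) -> coef k c = a.
  move=> k c a Ha; apply: (uniqc k c) => //.
  exact: (@epsilon_spec K (inhabits (0 : K)) (fun a => D k (c - a *: y k)) (ex_intro _ a Ha)).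
have gL : forall k, linon (D k) (g k).
  elim => [|k IH] a u v /=; first by rewrite mulr0 addr0.
  move=> [au Hu] [av Hv].
  have E : a *: u + v - (a * au + av) *: y k = a *: (u - au *: y k) + (v - av *: y k).
    by rewrite scalerBr scalerA addrACA -opprD scalerDl.
  have Huv : D k (a *: u + v - (a * au + av) *: y k) by rewrite E; apply: (DS k).2.
  rewrite (coefE _ _ _ Hu) (coefE _ _ _ Hv) (coefE _ _ _ Huv) E IH //.
  ring.
have gXi : forall k c, Xi c -> g k c = 0.
  elim => [//|k IH] c Hc /=.
  have H0 : D k (c - 0 *: y k) by rewrite scale0r subr0; apply: XiD.
  by rewrite (coefE _ _ _ H0) scale0r subr0 addr0 IH.
have Dstep : forall k c, D k c -> D k.+1 c /\ g k.+1 c = g k c.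
  move=> k c Dc; have H0 : D k (c - 0 *: y k) by rewrite scale0r subr0.
  split; first by exists 0.
  by rewrite /= (coefE _ _ _ H0) scale0r subr0 addr0.
have Dmono : forall k k' c, (k <= k')%N -> D k c -> D k' c /\ g k' c = g k c.
  move=> k k' c; elim: k' => [|k' IH]; first by rewrite leqn0 => /eqP -> .
  rewrite leq_eqVlt => /orP [/eqP -> //|]; rewrite ltnS => /IH H /H [Dc Ec].
  by have [? ->] := Dstep _ _ Dc.
have yD : forall k, D k.+1 (y k) /\ g k.+1 (y k) = 1.
  move=> k; have H1 : D k (y k - 1 *: y k) by rewrite scale1r subrr; apply: (DS k).1.
  split; first by exists 1.
  by rewrite /= (coefE _ _ _ H1) scale1r subrr gXi ?add0r //; apply: XiS.1.
pose S := fun c => exists k, D k c.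
pose G := fun c => g (epsilon (inhabits 0%N) (fun k => D k c)) c.
have GE : forall k c, D k c -> G c = g k c.
  move=> k c Dc; rewrite /G.
  have := @epsilon_spec nat (inhabits 0%N) (fun k => D k c) (ex_intro _ k Dc).
  set k' := epsilon _ _ => Dc'.
  case: (leqP k k') => kk.
    by have [_ ->] := Dmono _ _ _ kk Dc.
  by have [_ ->] := Dmono _ _ _ (ltnW kk) Dc'.
have SS : subsp S.
  split; first by exists 0%N; apply: XiS.1.
  move=> a u v [k1 H1] [k2 H2]; exists (maxn k1 k2).
  apply: (DS _).2; [exact: (Dmono _ _ _ (leq_maxl k1 k2) H1).1 | exact: (Dmono _ _ _ (leq_maxr k1 k2) H2).1].
have GL : linon S G.
  move=> a u v [k1 H1] [k2 H2].
  have [H1' _] := Dmono _ _ _ (leq_maxl k1 k2) H1.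
  have [H2' _] := Dmono _ _ _ (leq_maxr k1 k2) H2.
  rewrite (GE _ _ H1') (GE _ _ H2') (GE (maxn k1 k2)); last by apply: (DS _).2.
  by apply: gL.
have [f [fl fG]] := ext_lemma SS GL.
have Uf : U f.
  apply/(Hcl f); split => // c Hc.
  by rewrite fG; [rewrite (GE 0%N) //| exists 0%N].
case: Uf => n In.
have Xn : X n (y n) by apply: Xdec (Xy n).
have : f (y n) = 1.
  have [Dy gy] := yD n.
  by rewrite fG ?(GE _ _ Dy) //; exists n.+1.
by rewrite (Xn f In) => /eqP; rewrite eq_sym oner_eq0.
Qed.

Local Close Scope ring_scope.

Theorem lemma3p2 (K : fieldType) (C : lmodType K)
    (delta : C -> seq (C * C)) (eps : C -> K)
    (HC : is_coalgebra delta eps)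
    (I : nat -> ((C -> K) -> Prop))
    (Hideal : forall n, is_ideal delta (I n))
    (Hclosed : forall n, closed_finite (I n))
    (Hchain : forall n f, I n f -> I n.+1 f) :
  closed_finite (fun f => exists n, I n f) <->
  exists n, forall m, n <= m -> forall f, I m f <-> I n f.
Proof. exact: (main_aux HC Hideal Hclosed Hchain). Qed.
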